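(* Let $F_0$ be a quantifier-free formula in conjunctive normal form whose atoms are polynomial inequalities with integer coefficients over integer-valued variables (a QF-NIA formula). Consider the following procedure $\mathrm{SolveMinModels}(F_0)$, which is parametrized by a family of cost functions and by an optimization oracle. (1) Choose a finite set $B$ of artificial bounds (constraints $V\ge L$ or $V\le U$ with $L,U\in\mathbb{Z}$ on variables $V$ of $F_0$) sufficient to linearize $F_0$, and let $F$ be the linearization of $F_0$ with artificial bounds $B$ (as defined in the context). (2) Repeat until a time limit is exceeded: call the oracle on $(F,B)$. The oracle either returns $\mathrm{Unsat}$, which it does only if $F$ is unsatisfiable over the integers, or returns a model $M$ of $F$ minimizing $\mathrm{cost}(M)$ among all models of $F$, where $\mathrm{cost}$ is the cost function associated with the current $F$ and $B$. If the oracle returns $\mathrm{Unsat}$, the procedure returns $\mathrm{Unsat}$. Otherwise, if $\mathrm{cost}(M)=0$, the procedure returns $\mathrm{Sat}$. Otherwise, choose a nonempty set $S$ of bounds of $B$ violated by $M$. Form $B'$ from $B$ by replacing each $V\ge L$ in $S$ with $V\ge M(V)$ and each $V\le U$ in $S$ with $V\le M(V)$. Add to $F$ the case-splitting clauses $V=K\rightarrow v_Q=Q[V:=K]$ for every value $K$ newly included in the domain of $V$ and every monomial $Q$ linearized using $V$. Set $B:=B'$. (3) If the time limit is exceeded, return $\mathrm{Unknown}$. Suppose that, at every iteration, the cost function used is admissible for the current linearization $F$ of $F_0$ with the current artificial bounds $B$. Then: (i) if $\mathrm{SolveMinModels}(F_0)$ returns $\mathrm{Sat}$, then $F_0$ is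 satisfiable over the integers; and (ii) if $\mathrm{SolveMinModels}(F_0)$ returns $\mathrm{Unsat}$, then $F_0$ is unsatisfiable over the integers.
   Context: Linearization. Let $F_0$ be a QF-NIA formula and let $B$ be a set of artificial bounds, i.e. constraints $V\ge L$ or $V\le U$ on variables of $F_0$. A linearization $F$ of $F_0$ with artificial bounds $B$ is a QF-LIA formula obtained as follows. While some non-linear monomial $Q$ occurs, pick a variable $V$ of $Q$ that has both a lower bound $l$ and an upper bound $u$ in $F_0\cup B$. Introduce a fresh integer variable $v_Q$ and replace every occurrence of $Q$ by $v_Q$. Add, for each integer $K$ with $l\le K\le u$, the case-splitting clause $V=K\rightarrow v_Q=Q[V:=K]$, where $Q[V:=K]$ is $Q$ with $V$ evaluated at $K$. If new non-linear monomials appear in these clauses, they are processed in the same way. The resulting formula $F$ consists of the clauses of $F_0$ with monomials replaced, together with all case-splitting clauses. It does not contain the bounds of $B$. A model of $F$ is an integer assignment to the original and fresh variables satisfying $F$; it need not satisfy $B$. Admissibility. A function $\mathrm{cost}$ on the models of $F$ is admissible if (1) $\mathrm{cost}(M)\ge 0$ for every model $M$ of $F$, and (2) whenever $\mathrm{cost}(M)=0$, the assignment $M$ (restricted to the variables of $F_0$) is a model of $F_0$. *)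

(* Defs.v *)
From HB Require Import structures.
From mathcomp Require Import all_boot all_order all_algebra.
Set Implicit Arguments. Unset Strict Implicit. Unset Printing Implicit Defensive.
Import Order.TTheory GRing.Theory Num.Theory.
Local Open Scope ring_scope.

Definition var := nat.

(* A monomial is a power product of variables, given as the list of its
   variables with repetitions (x^2*y = [:: x; x; y]); two monomials are the
   same monomial iff they are permutations of each other ([perm_eq]).
   [::] is the constant monomial 1. *)
Definition monomial := seq var.

Definition poly := seq (int * monomial).

Inductive cmp := CGe | CGt | CLe | CLt | CEq | CNe.

Definition cmp_code (c : cmp) : nat :=
  match c with CGe => 0 | CGt => 1 | CLe => 2 | CLt => 3 | CEq => 4 | CNe => 5 end%N.
Definition cmp_decode (n : nat) : option cmp :=
  match n with 0 => Some CGe | 1 => Some CGt | 2 => Some CLe | 3 => Some CLt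
  | 4 => Some CEq | 5 => Some CNe | _ => None end%N.
Lemma cmp_codeK : pcancel cmp_code cmp_decode. Proof. by case. Qed.
HB.instance Definition _ := Equality.copy cmp (pcan_type cmp_codeK).

(* An atom (p, c) stands for the polynomial constraint  p c 0. *)
Definition atom := (poly * cmp)%type.
Definition clause := seq atom.
Definition formula := seq clause.

(* Artificial bound: (true, V, L) is  V >= L  and (false, V, U) is  V <= U. *)
Definition bound := (bool * var * int)%type.
Definition bvar (b : bound) : var := b.1.2.
Definition bval (b : bound) : int := b.2.
Definition is_lower (b : bound) : bool := b.1.1.

Definition assignment := var -> int.

Definition eval_mono (M : assignment) (m : monomial) : int := \prod_(x <- m) M x.
Definition eval_poly (M : assignment) (p : poly) : int :=
  \sum_(t <- p) t.1 * eval_mono M t.2.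
Definition eval_cmp (c : cmp) (z : int) : bool :=
  match c with
  | CGe => 0 <= z | CGt => 0 < z | CLe => z <= 0 | CLt => z < 0
  | CEq => z == 0 | CNe => z != 0 end.
Definition atom_holds (M : assignment) (a : atom) : bool := eval_cmp a.2 (eval_poly M a.1).
Definition clause_holds (M : assignment) (c : clause) : bool := has (atom_holds M) c.
Definition holds (M : assignment) (F : formula) : bool := all (clause_holds M) F.
Definition satisfiable (F : formula) : Prop := exists M : assignment, holds M F.

Definition bound_holds (M : assignment) (b : bound) : bool :=
  if is_lower b then bval b <= M (bvar b) else M (bvar b) <= bval b.

Definition formula_monos (F : formula) : seq monomial :=
  flatten (flatten [seq [seq [seq t.2 | t <- a.1] | a <- c] | c <- F]).

Definition vars (F : formula) : seq var := flatten (formula_monos F).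

Definition occurs_nonlinear (Q : monomial) (F : formula) : Prop :=
  Q \in formula_monos F /\ (2 <= size Q)%N.

Definition linear_formula (F : formula) : bool :=
  all (fun m : monomial => size m <= 1)%N (formula_monos F).

Definition artificial_bounds (F0 : formula) (B : seq bound) : Prop :=
  forall b, b \in B -> bvar b \in vars F0.

Definition has_lower (F0 : formula) (B : seq bound) (V : var) (l : int) : Prop :=
  (true, V, l) \in B \/
  exists a : atom, [:: a] \in F0 /\ forall M : assignment, atom_holds M a = (l <= M V).
Definition has_upper (F0 : formula) (B : seq bound) (V : var) (u : int) : Prop :=
  (false, V, u) \in B \/
  exists a : atom, [:: a] \in F0 /\ forall M : assignment, atom_holds M a = (M V <= u).

Definition zrange (a b : int) : seq int :=
  if a <= b then mkseq (fun i => a + i%:Z) (absz (b - a)).+1 else [::].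

Definition replace_mono (Q : monomial) (v : var) (m : monomial) : monomial :=
  if perm_eq m Q then [:: v] else m.
Definition replace_formula (Q : monomial) (v : var) (F : formula) : formula :=
  [seq [seq ([seq (t.1, replace_mono Q v t.2) | t <- a.1], a.2) | a <- c] | c <- F].

(* The case-splitting clause  V = K -> v = Q[V:=K],  where
   Q[V:=K] = K^e * Q' with e the multiplicity of V in Q and Q' = Q without V.
   Written as the CNF clause  (V - K != 0) \/ (v - K^e * Q' = 0). *)
Definition case_clause (v : var) (Q : monomial) (V : var) (K : int) : clause :=
  [:: ([:: (1, [:: V]); (- K, [::])], CNe);
      ([:: (1, [:: v]); (- (K ^+ count_mem V Q), filter (predC1 V) Q)], CEq)].

(* State of a linearization: the current formula, the variables used so far
   (those of F0 and the fresh ones), and the record of linearized monomials: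
   (v_Q, Q, V) means the fresh variable v_Q replaced Q, linearized using V. *)
Record lstate := LState {
  fm : formula;
  used : seq var;
  lin : seq (var * monomial * var)
}.

Definition init_state (F0 : formula) : lstate := LState F0 (vars F0) [::].

Inductive lin_step (F0 : formula) (B : seq bound) : lstate -> lstate -> Prop :=
| LinStep (st : lstate) (Q : monomial) (V : var) (l u : int) (v : var) :
    occurs_nonlinear Q (fm st) ->
    V \in Q ->
    has_lower F0 B V l -> has_upper F0 B V u ->
    v \notin used st ->
    lin_step F0 B st
      (LState (replace_formula Q v (fm st) ++
                 [seq case_clause v Q V K | K <- zrange l u])
              (v :: used st) ((v, Q, V) :: lin st)).

Inductive lin_steps (F0 : formula) (B : seq bound) : lstate -> lstate -> Prop :=
| LinRefl st : lin_steps F0 B st st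
| LinTrans st1 st2 st3 :
    lin_step F0 B st1 st2 -> lin_steps F0 B st2 st3 -> lin_steps F0 B st1 st3.

Definition linearizes (F0 : formula) (B : seq bound) (st st' : lstate) : Prop :=
  lin_steps F0 B st st' /\ linear_formula (fm st').

Definition linearization (F0 : formula) (B : seq bound) (st : lstate) : Prop :=
  linearizes F0 B (init_state F0) st.

Definition admissible (R : realDomainType) (F0 F : formula) (cost : assignment -> R) : Prop :=
  (forall M, holds M F -> 0 <= cost M) /\
  (forall M, holds M F -> cost M = 0 -> holds M F0).

Definition min_model (R : realDomainType) (F : formula) (cost : assignment -> R)
  (M : assignment) : Prop :=
  holds M F /\ forall M', holds M' F -> cost M <= cost M'.

Definition upd_bound (M : assignment) (b : bound) : bound :=
  (is_lower b, bvar b, M (bvar b)).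

Definition new_values (M : assignment) (b : bound) : seq int :=
  if is_lower b then zrange (M (bvar b)) (bval b - 1)
  else zrange (bval b + 1) (M (bvar b)).

(* In the added clauses, a non-linear monomial already linearized is replaced
   by its fresh variable (first recorded one). *)
Definition rename_fresh (ln : seq (var * monomial * var)) (m : monomial) : monomial :=
  if (2 <= size m)%N then
    match [seq d <- ln | perm_eq d.1.2 m] with
    | d :: _ => [:: d.1.1]
    | [::] => m
    end
  else m.
Definition rename_clause (ln : seq (var * monomial * var)) (c : clause) : clause :=
  [seq ([seq (t.1, rename_fresh ln t.2) | t <- a.1], a.2) | a <- c].

Definition new_clauses (ln : seq (var * monomial * var)) (M : assignment)
  (S : seq bound) : formula :=
  flatten [seq flatten [seq [seq rename_clause ln (case_clause d.1.1 d.1.2 d.2 K)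
                            | K <- new_values M b]
                       | d <- ln & d.2 == bvar b]
          | b <- S].

(* States (current linearization state, current artificial bounds) reached at
   the beginning of an iteration of step (2) of SolveMinModels(F0), where the
   cost family [cost] gives the cost function associated with (F, B). *)
Inductive reachable (R : realDomainType) (F0 : formula)
  (cost : formula -> seq bound -> assignment -> R) : lstate -> seq bound -> Prop :=
| ReachInit (B : seq bound) (st : lstate) :
    artificial_bounds F0 B ->
    linearization F0 B st ->
    reachable F0 cost st B
| ReachStep (st : lstate) (B : seq bound) (M : assignment) (S : seq bound) (st' : lstate) :
    reachable F0 cost st B ->
    min_model (fm st) (cost (fm st) B) M ->
    cost (fm st) B M != 0 ->
    S != [::] -> {subset S <= B} -> all (fun b => ~~ bound_holds M b) S ->
    (* new bounds B', new clauses added, remaining monomials processed *)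
    linearizes F0 [seq if b \in S then upd_bound M b else b | b <- B]
      (LState (fm st ++ new_clauses (lin st) M S) (used st) (lin st)) st' ->
    reachable F0 cost st' [seq if b \in S then upd_bound M b else b | b <- B].

Inductive result := Sat | Unsat | Unknown.

(* SolveMinModels(F0) may return [r]. The oracle returns Unsat only if the
   current F is unsatisfiable; Unknown may be returned when the time limit is
   exceeded (at any iteration). *)
Inductive solve_returns (R : realDomainType) (F0 : formula)
  (cost : formula -> seq bound -> assignment -> R) : result -> Prop :=
| RetUnsat st B :
    reachable F0 cost st B -> ~ satisfiable (fm st) -> solve_returns F0 cost Unsat
| RetSat st B M :
    reachable F0 cost st B -> min_model (fm st) (cost (fm st) B) M ->
    cost (fm st) B M = 0 -> solve_returns F0 cost Sat
| RetUnknown st B :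
    reachable F0 cost st B -> solve_returns F0 cost Unknown.

(* Main.v *)
Require Import Defs.
From mathcomp Require Import all_boot all_order all_algebra.
Import Order.TTheory GRing.Theory Num.Theory.
Local Open Scope ring_scope.
Set Implicit Arguments.
Unset Strict Implicit.

Definition mono_in (F : formula) (P : monomial -> Prop) :=
  forall c a t, c \in F -> a \in c -> t \in a.1 -> P t.2.

Lemma monos_fw (m : monomial) (F : formula) : m \in formula_monos F ->
  exists c a t, [/\ c \in F, a \in c, t \in a.1 & m = t.2].
Proof.
case/flattenP => s /flattenP [s' /mapP [c cF ->] /mapP [a ac ->]] /mapP [t ta ->].
by exists c, a, t.
Qed.

Lemma vars_bw (x : var) (F : formula) (c : clause) (a : atom) (t : int * monomial) : c \in F -> a \in c -> t \in a.1 -> x \in t.2 -> x \in vars F.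
Proof.
move=> cF ac ta xt; apply/flattenP; exists t.2 => //.
apply/flattenP; exists [seq u.2 | u <- a.1]; last exact: map_f.
apply/flattenP; exists [seq [seq u.2 | u <- b.1] | b <- c]; last exact: (map_f (fun b : atom => [seq u.2 | u <- b.1])).
exact: (map_f (fun c : clause => [seq [seq u.2 | u <- b.1] | b <- c])).
Qed.

Lemma clause_map N N' (f : monomial -> monomial) (c : clause) :
  (forall a t, a \in c -> t \in a.1 -> eval_mono N' (f t.2) = eval_mono N t.2) ->
  clause_holds N' [seq ([seq (t.1, f t.2) | t <- a.1], a.2) | a <- c] = clause_holds N c.
Proof.
move=> H; rewrite /clause_holds has_map; apply: eq_in_has => a ac /=.
rewrite /atom_holds /=; congr eval_cmp.
rewrite /eval_poly big_map; apply: eq_big_seq => t ta /=.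
by rewrite (H a t).
Qed.

Lemma holds_map N N' (f : monomial -> monomial) (F : formula) :
  (forall c a t, c \in F -> a \in c -> t \in a.1 -> eval_mono N' (f t.2) = eval_mono N t.2) ->
  holds N' [seq [seq ([seq (t.1, f t.2) | t <- a.1], a.2) | a <- c] | c <- F] = holds N F.
Proof.
move=> H; rewrite /holds all_map; apply: eq_in_all => c cF /=.
by apply: clause_map => a t; apply: (H c).
Qed.

Lemma eval_mono_split N Q V :
  eval_mono N Q = N V ^+ count_mem V Q * eval_mono N (filter (predC1 V) Q).
Proof.
rewrite /eval_mono; elim: Q => [|x Q IH]; first by rewrite !big_nil expr0 mulr1.
rewrite /= big_cons IH; case: eqP => [->|/eqP ne] /=. idtac.
  by rewrite add1n exprS mulrA.
by rewrite add0n big_cons mulrCA. Qed.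

Lemma eval_mono_eq N N' m : {in m, N =1 N'} -> eval_mono N m = eval_mono N' m.
Proof. by move=> H; apply: eq_big_seq. Qed.

Lemma eval_mono_perm N m m' : perm_eq m m' -> eval_mono N m = eval_mono N m'.
Proof. by move=> p; apply: perm_big. Qed.

Lemma eval_mono1 N v : eval_mono N [:: v] = N v.
Proof. by rewrite /eval_mono big_cons big_nil mulr1. Qed.

Definition Inv (st : lstate) : Prop :=
  mono_in (fm st) (fun m => {subset m <= used st}) /\
  (forall d, d \in lin st -> [/\ d.1.1 \in used st, d.2 \in used st & {subset d.1.2 <= used st}]) /\
  exists N, holds N (fm st) /\ forall d, d \in lin st -> N d.1.1 = eval_mono N d.1.2.

Lemma mono_in_cat F G P : mono_in F P -> mono_in G P -> mono_in (F ++ G) P.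
Proof. by move=> HF HG c a t; rewrite mem_cat => /orP [] ?; [apply: HF|apply: HG]. Qed.

Lemma case_holds N v Q V K :
  N v = eval_mono N Q -> clause_holds N (case_clause v Q V K).
Proof.
move=> Nv; rewrite /clause_holds /= /atom_holds /= /eval_poly !big_cons !big_nil /=.
rewrite !eval_mono1 /eval_mono big_nil !mulr1 !mul1r addr0.
case: (eqVneq (N V) K) => [<-|ne]; last by rewrite subr_eq0 ne.
by rewrite subrr eqxx /= addr0 Nv (eval_mono_split N Q V) /eval_mono mulNr addrN eqxx.
Qed.

Lemma case_terms v Q V K (a : atom) (t : int * monomial) :
  a \in case_clause v Q V K -> t \in a.1 -> {subset t.2 <= v :: V :: Q}.
Proof.
rewrite /case_clause !inE => /orP [] /eqP -> /=; rewrite !inE => /orP [] /eqP -> /= x;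
  rewrite ?inE ?mem_filter.
all: try by move=> ->; rewrite ?orbT.
all: try by case/andP => _ ->; rewrite !orbT.
all: by rewrite in_nil.
Qed.

Lemma step_inv F0 B st st' : lin_step F0 B st st' -> Inv st -> Inv st'.
Proof.
case=> st0 Q V l u v [Qin szQ] VQ _ _ vfresh [Hm [Hl [N [HN HNl]]]].
have [c [a [t [cF ac ta Qt]]]] := monos_fw Qin.
have Qused : {subset Q <= used st0} by rewrite Qt; exact: (Hm c a t cF ac ta).
have vQ : v \notin Q by apply/negP => /Qused; rewrite (negbTE vfresh).
pose N' := fun x => if x == v then eval_mono N Q else N x.
have N'eq : forall m, {subset m <= used st0} -> eval_mono N' m = eval_mono N m.
  move=> m sub; symmetry; apply: eval_mono_eq => x /sub xu; rewrite /N'.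
  by case: eqP => // xv; move: vfresh; rewrite -xv xu.
have N'v : N' v = eval_mono N Q by rewrite /N' eqxx.
split; [|split] => /=.
- apply: mono_in_cat.
  + move=> c' a' t' /mapP [c0 c0F ->] /mapP [a0 a0c ->] /= /mapP [t0 t0a ->] /=.
    rewrite /replace_mono; case: ifP => _ x.
      by rewrite mem_seq1 => /eqP ->; exact: mem_head.
    by move=> /(Hm _ _ _ c0F a0c t0a) xu; rewrite inE xu orbT.
  + move=> c' a' t' /mapP [K _ ->] ac' ta' x /(case_terms ac' ta').
    rewrite !inE => /orP [->//|/orP [/eqP ->|/Qused ->]]; last by rewrite orbT.
    by rewrite (Qused V VQ) orbT.
- move=> d; rewrite inE => /orP [/eqP -> /= | /Hl [h1 h2 h3]].
    split; first exact: mem_head; first by rewrite inE (Qused V VQ) orbT.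
    by move=> x /Qused xu; rewrite inE xu orbT.
  split; [by rewrite inE h1 orbT|by rewrite inE h2 orbT|].
  by move=> x /h3 xu; rewrite inE xu orbT.
- exists N'; split.
    rewrite /holds all_cat; apply/andP; split.
      change (holds N' (replace_formula Q v (fm st0))); rewrite /replace_formula (holds_map (f := replace_mono Q v) (N:=N)) // => c0 a0 t0 c0F a0c t0a.
      rewrite /replace_mono; case: ifP => p.
        by rewrite eval_mono1 N'v (eval_mono_perm N p).
      exact: N'eq _ (Hm _ _ _ c0F a0c t0a).
    rewrite all_map; apply/allP => K _ /=; apply: case_holds.
    by rewrite N'v N'eq.
  move=> d; rewrite inE => /orP [/eqP -> /= | dl]; first by rewrite N'v N'eq.
  have [h1 h2 h3] := Hl d dl.
  rewrite (N'eq _ h3) /N'; case: eqP => [e|_]; last exact: HNl.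
  by move: vfresh; rewrite -e h1.
Qed.

Lemma steps_inv F0 B st st' : lin_steps F0 B st st' -> Inv st -> Inv st'.
Proof. by elim=> // s1 s2 s3 H _ IH /(step_inv H). Qed.

Lemma rename_fact (ln : seq (var * monomial * var)) m :
  rename_fresh ln m = m \/
  exists d, [/\ d \in ln, perm_eq d.1.2 m & rename_fresh ln m = [:: d.1.1]].
Proof.
rewrite /rename_fresh; case: ifP => _; last by left.
case E: [seq d <- ln | perm_eq d.1.2 m] => [|d s]; first by left.
right; exists d.
have : d \in [seq d <- ln | perm_eq d.1.2 m] by rewrite E mem_head.
by rewrite mem_filter => /andP [p dl].
Qed.

Lemma new_clausesP ln M S c : c \in new_clauses ln M S ->
  exists d K, d \in ln /\ c = rename_clause ln (case_clause d.1.1 d.1.2 d.2 K).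
Proof.
case/flattenP => s /mapP [b _ ->] /flattenP [s' /mapP [d] ].
rewrite mem_filter => /andP [_ dl] -> /mapP [K _ ->].
by exists d, K.
Qed.

Lemma newcl_inv st M S : Inv st ->
  Inv (LState (fm st ++ new_clauses (lin st) M S) (used st) (lin st)).
Proof.
move=> [Hm [Hl [N [HN HNl]]]].
split; [|split] => //=.
- apply: mono_in_cat => // c' a' t' /new_clausesP [d [K [dl ->]]].
  move=> /mapP [a0 a0c ->] /= /mapP [t0 t0a ->] /=.
  have [h1 h2 h3] := Hl d dl.
  case: (rename_fact (lin st) t0.2) => [->|[d' [d'l _ ->]]].
    move=> x /(case_terms a0c t0a); rewrite !inE => /orP [/eqP ->//|/orP [/eqP ->//|]].
    exact: h3.
  have [h1' _ _] := Hl d' d'l.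
  by move=> x; rewrite mem_seq1 => /eqP ->.
- exists N; split => //.
  rewrite /holds all_cat; apply/andP; split; first exact: HN.
  apply/allP => c' /new_clausesP [d [K [dl ->]]].
  rewrite /rename_clause (clause_map (N:=N)); first by apply: case_holds; exact: HNl.
  move=> a0 t0 _ _; case: (rename_fact (lin st) t0.2) => [->//|[d' [d'l p ->]]].
  by rewrite eval_mono1 HNl // (eval_mono_perm N p).
Qed.

Lemma reach_inv (R : realDomainType) F0 (cost : formula -> seq bound -> assignment -> R) st B :
  satisfiable F0 -> reachable F0 cost st B -> Inv st.
Proof.
move=> [M0 HM0]; elim => {st B}.
- move=> B st _ [Hs _]; apply: (steps_inv Hs); split; [|split] => //=.
  + by move=> c a t cF ac ta x xt; exact: (vars_bw cF ac ta xt).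
  + by exists M0.
- move=> st B M S st' _ IH _ _ _ _ _ [Hs _]; apply: (steps_inv Hs); exact: newcl_inv.
Qed.

Theorem theorem3p1 (R : realDomainType) (F0 : formula)
  (cost : formula -> seq bound -> assignment -> R) :
  (forall (st : lstate) (B : seq bound),
      reachable F0 cost st B -> admissible F0 (fm st) (cost (fm st) B)) ->
  (solve_returns F0 cost Sat -> satisfiable F0) /\
  (solve_returns F0 cost Unsat -> ~ satisfiable F0).
Proof.
move=> Hadm; split.
- move=> H; inversion H as [| st B M Hr [HM _] H0 |]; subst.
  have [_ H2] := Hadm _ _ Hr.
  by exists M; apply: H2.
- move=> H Hs; inversion H as [st B Hr Hns| |]; subst.
  have [_ [_ [N [HN _]]]] := reach_inv Hs Hr.
  by apply: Hns; exists N.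
Qed.
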